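(* Let $q$ be a prime power and $T\in\mathbb F_q[X,Y,Z]$ a reduced polynomial. Consider the properties: (a) $T(a,0,z)=T(0,b,z)=z$ for all $a,b,z\in\mathbb F_q$; (c) for all $a,b,c,d\in\mathbb F_q$ with $a\neq c$ there is a unique $x\in\mathbb F_q$ with $T(x,a,b)=T(x,c,d)$; (d) for all $a,b,c\in\mathbb F_q$ there is a unique $z\in\mathbb F_q$ with $T(a,b,z)=c$; (e) for all $a,b,c,d\in\mathbb F_q$ with $a\neq c$ there is a unique pair $(y,z)\in\mathbb F_q^2$ with $T(a,y,z)=b$ and $T(c,y,z)=d$. Then: (i) if $T$ satisfies (a) and (c), then $T(X,y,z)$ is a permutation polynomial in $X$ over $\mathbb F_q$ for every $(y,z)\in\mathbb F_q^*\times\mathbb F_q$; (ii) if $T$ satisfies (a) and (e), then $T(x,Y,z)$ is a permutation polynomial in $Y$ over $\mathbb F_q$ for every $(x,z)\in\mathbb F_q^*\times\mathbb F_q$; (iii) if $T$ satisfies (d), then $T(x,y,Z)$ is a permutation polynomial in $Z$ over $\mathbb F_q$ for every $(x,y)\in\mathbb F_q\times\mathbb F_q$.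
   Context: A polynomial is reduced if its degree in each variable is less than $q$. A univariate polynomial $f\in\mathbb F_q[X]$ is a permutation polynomial over $\mathbb F_q$ if $x\mapsto f(x)$ is a bijection of $\mathbb F_q$. $\mathbb F_q^*$ denotes the nonzero elements of $\mathbb F_q$. *)

(* Defs.v *)
From HB Require Import structures.
From mathcomp Require Import all_boot all_order all_algebra all_field.
From mathcomp Require Import mpoly.
Set Implicit Arguments. Unset Strict Implicit. Unset Printing Implicit Defensive.
Import GRing.Theory.
Local Open Scope ring_scope.

(* The finite field F_q is an arbitrary finite field F, with q = #|F|. *)

Definition reduced (F : finFieldType) (n : nat) (T : {mpoly F[n]}) : Prop :=
  forall m : 'X_{1..n}, m \in msupp T -> forall i : 'I_n, (m i < #|F|)%N.

Definition ev3 (F : finFieldType) (T : {mpoly F[3]}) (a b c : F) : F :=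
  T.@[fun i : 'I_3 => nth 0 [:: a; b; c] i].

Definition specX (F : finFieldType) (T : {mpoly F[3]}) (y z : F) : {poly F} :=
  mmap (@polyC F) (fun i : 'I_3 => nth 0 [:: 'X; y%:P; z%:P] i) T.
Definition specY (F : finFieldType) (T : {mpoly F[3]}) (x z : F) : {poly F} :=
  mmap (@polyC F) (fun i : 'I_3 => nth 0 [:: x%:P; 'X; z%:P] i) T.
Definition specZ (F : finFieldType) (T : {mpoly F[3]}) (x y : F) : {poly F} :=
  mmap (@polyC F) (fun i : 'I_3 => nth 0 [:: x%:P; y%:P; 'X] i) T.

Definition perm_poly (F : finFieldType) (f : {poly F}) : Prop :=
  bijective (fun x : F => f.[x]).

(* Main.v *)
Require Import Defs.
From HB Require Import structures.
From mathcomp Require Import all_boot all_order all_algebra all_field.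
From mathcomp Require Import mpoly.
Import GRing.Theory.
Local Open Scope ring_scope.

Lemma mmap_horner (F : finFieldType) (T : {mpoly F[3]}) (g : 'I_3 -> {poly F}) x :
  (mmap (@polyC F) g T).[x] = T.@[fun i => (g i).[x]].
Proof.
rewrite /mmap mevalE horner_sum; apply: eq_bigr => m _.
by rewrite hornerM hornerC /mmap1 horner_prod; congr (_ * _); apply: eq_bigr => i _; rewrite horner_exp.
Qed.

Lemma specXE (F : finFieldType) (T : {mpoly F[3]}) y z x : (specX T y z).[x] = ev3 T x y z.
Proof. rewrite /specX mmap_horner /ev3; apply: meval_eq => i.
by case: i => [[|[|[|]]] ?] //=; rewrite ?hornerX ?hornerC. Qed.
Lemma specYE (F : finFieldType) (T : {mpoly F[3]}) x z y : (specY T x z).[y] = ev3 T x y z.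
Proof. rewrite /specY mmap_horner /ev3; apply: meval_eq => i.
by case: i => [[|[|[|]]] ?] //=; rewrite ?hornerX ?hornerC. Qed.
Lemma specZE (F : finFieldType) (T : {mpoly F[3]}) x y z : (specZ T x y).[z] = ev3 T x y z.
Proof. rewrite /specZ mmap_horner /ev3; apply: meval_eq => i.
by case: i => [[|[|[|]]] ?] //=; rewrite ?hornerX ?hornerC. Qed.

Lemma bij_of (F : finType) (f : F -> F) : (forall c, exists! z, f z = c) -> bijective f.
Proof.
move=> H; have inj: injective f.
  move=> a b e; have [z [_ U]] := H (f a).
  by rewrite -(U a erefl) (U b (esym e)).
by apply: injF_bij.
Qed.

Theorem theorem4p2 (F : finFieldType) (T : {mpoly F[3]}) :
  reduced T ->
  let Pa := forall a b z : F, ev3 T a 0 z = z /\ ev3 T 0 b z = z in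
  let Pc := forall a b c d : F, a != c ->
              exists! x : F, ev3 T x a b = ev3 T x c d in
  let Pd := forall a b c : F, exists! z : F, ev3 T a b z = c in
  let Pe := forall a b c d : F, a != c ->
              exists! yz : F * F, ev3 T a yz.1 yz.2 = b /\ ev3 T c yz.1 yz.2 = d in
  [/\ (Pa -> Pc -> forall y z : F, y != 0 -> perm_poly (specX T y z)),
      (Pa -> Pe -> forall x z : F, x != 0 -> perm_poly (specY T x z)) &
      (Pd -> forall x y : F, perm_poly (specZ T x y))].
Proof.
move=> _ Pa Pc Pd Pe; split.
- move=> ha hc y z y0; rewrite /perm_poly; apply: bij_of => d.
  have [x [hx U]] := hc y z 0 d y0.
  exists x; split; first by rewrite specXE hx (proj1 (ha x 0 d)).
  move=> x' hx'; apply: U; by rewrite -specXE hx' (proj1 (ha x' 0 d)).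
- move=> ha he x z x0; rewrite /perm_poly; apply: bij_of => d.
  have [[y z'] [[/= h1 h2] U]] := he 0 z x d ltac:(by rewrite eq_sym).
  rewrite (proj2 (ha 0 y z')) in h1; subst z'.
  exists y; split; first by rewrite specYE.
  move=> y' hy'; have := U (y', z); rewrite /= (proj2 (ha 0 y' z)) -specYE hy'.
  by move=> /(_ (conj erefl erefl)) [].
- move=> hd x y; apply: bij_of => c.
  have [z [hz U]] := hd x y c; exists z; split; first by rewrite specZE.
  by move=> z' h; apply: U; rewrite -specZE.
Qed.
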